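(* Let $(X,d)$ be a bounded ultrametric space. Then the metric $d(x,y)$ has the strong Erdős–Hajnal property: for every $\varepsilon>0$ there is $\delta>0$ such that for all finite $A,B\subseteq X$ there are $A_0\subseteq A$, $B_0\subseteq B$ with $|A_0|\geq\delta|A|$, $|B_0|\geq\delta|B|$ and $|d(a,b)-d(a',b')|\leq\varepsilon$ for all $a,a'\in A_0$, $b,b'\in B_0$. *)

(* Defs.v *)
From Stdlib Require Import Reals List.
Import ListNotations.
Open Scope R_scope.

Definition is_metric {X : Type} (d : X -> X -> R) : Prop :=
  (forall x y, 0 <= d x y) /\
  (forall x y, d x y = 0 <-> x = y) /\
  (forall x y, d x y = d y x) /\
  (forall x y z, d x z <= d x y + d y z).

Definition is_ultrametric {X : Type} (d : X -> X -> R) : Prop :=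
  is_metric d /\ (forall x y z, d x z <= Rmax (d x y) (d y z)).

Definition bounded_metric {X : Type} (d : X -> X -> R) : Prop :=
  exists M : R, forall x y, d x y <= M.

(* A finite subset of X is represented by a duplicate-free list;
   its cardinality is the length of the list. S0 is a subset of S if
   S0 is duplicate-free and every element of S0 lies in S. *)
Definition finsubset {X : Type} (S0 S : list X) : Prop :=
  NoDup S0 /\ incl S0 S.

Definition strong_EH {X : Type} (f : X -> X -> R) : Prop :=
  forall eps : R, eps > 0 ->
  exists delta : R, delta > 0 /\
    forall A B : list X, NoDup A -> NoDup B ->
    exists A0 B0 : list X,
      finsubset A0 A /\ finsubset B0 B /\
      INR (length A0) >= delta * INR (length A) /\
      INR (length B0) >= delta * INR (length B) /\
      forall a a' b b', In a A0 -> In a' A0 -> In b B0 -> In b' B0 ->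
        Rabs (f a b - f a' b') <= eps.

(* Main.v *)
Require Import Defs.
From Stdlib Require Import Reals List.
From Stdlib Require Import Lra Lia Bool.
Import ListNotations.
Open Scope R_scope.

Definition nb {X : Type} (d : X -> X -> R) (t : R) (x y : X) : bool :=
  if Rle_dec (d x y) t then true else false.

Lemma nb_true {X : Type} (d : X -> X -> R) t x y : nb d t x y = true <-> d x y <= t.
Proof. unfold nb; destruct (Rle_dec (d x y) t); split; intros; auto; try discriminate; lra. Qed.

Lemma nb_false {X : Type} (d : X -> X -> R) t x y : nb d t x y = false <-> t < d x y.
Proof. unfold nb; destruct (Rle_dec (d x y) t); split; intros; auto; try discriminate; lra. Qed.

Definition good {X : Type} (A B : list X) (k : R) (R2 : X -> X -> Prop) : Prop :=
  exists A0 B0, finsubset A0 A /\ finsubset B0 B /\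
    INR (length A0) >= k * INR (length A) /\
    INR (length B0) >= k * INR (length B) /\
    forall a b, In a A0 -> In b B0 -> R2 a b.

Lemma filter_fs {X : Type} (f : X -> bool) (l : list X) : NoDup l -> finsubset (filter f l) l.
Proof.
  intros H; split. apply NoDup_filter; auto.
  intros y Hy; apply filter_In in Hy; tauto.
Qed.

Lemma len_split {X : Type} (f : X -> bool) (l : list X) :
  (length (filter f l) + length (filter (fun y => negb (f y)) l) = length l)%nat.
Proof.
  induction l as [|a l IH]; simpl; auto.
  destruct (f a); simpl; lia.
Qed.

Lemma len_split_R {X : Type} (f : X -> bool) (l : list X) :
  INR (length (filter f l)) + INR (length (filter (fun y => negb (f y)) l)) = INR (length l).
Proof. rewrite <- plus_INR, len_split; auto. Qed.

Lemma len_or {X : Type} (f g : X -> bool) (l : list X) :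
  (length (filter (fun y => orb (f y) (g y)) l) <= length (filter f l) + length (filter g l))%nat.
Proof.
  induction l as [|a l IH]; simpl; auto.
  destruct (f a), (g a); simpl; lia.
Qed.

Lemma filter_all {X : Type} (f : X -> bool) (l : list X) :
  (forall y, In y l -> f y = true) -> filter f l = l.
Proof.
  induction l as [|a l IH]; simpl; intros H; auto.
  rewrite H by auto. rewrite IH; auto.
Qed.

Lemma filter_false {X : Type} (l : list X) (t : R) (d : X -> X -> R) :
  filter (fun y => existsb (fun z => nb d t z y) []) l = [].
Proof. induction l; simpl; auto. Qed.

Lemma prefix_lemma {X : Type} (h : list X -> R) (c : R) (L : list X) :
  h [] < c -> c <= h L -> exists x L1, h L1 < c /\ c <= h (x :: L1).
Proof.
  induction L as [|x L IH]; intros H0 H1.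
  - lra.
  - destruct (Rle_dec c (h L)) as [Hc|Hc].
    + apply IH; auto.
    + exists x, L; split; auto; lra.
Qed.

Lemma closed_case {X : Type} (d : X -> X -> R) t (P : X -> bool) (A B : list X) :
  NoDup A -> NoDup B ->
  (forall a b, P a = true -> P b = false -> t < d a b) ->
  (forall x y, d x y = d y x) ->
  INR (length (filter P A)) >= / 4 * INR (length A) ->
  INR (length (filter (fun y => negb (P y)) A)) >= / 4 * INR (length A) ->
  good A B (/4) (fun a b => t < d a b).
Proof.
  intros HA HB Hcl Hsym H1 H2.
  pose proof (len_split_R P B) as HL.
  pose proof (pos_INR (length (filter P B))).
  pose proof (pos_INR (length (filter (fun y => negb (P y)) B))).
  destruct (Rge_dec (INR (length (filter P B))) (/4 * INR (length B))) as [Hb|Hb].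
  - exists (filter (fun y => negb (P y)) A), (filter P B).
    split; [apply filter_fs; auto|split; [apply filter_fs; auto|split; [try lra|split; [try lra|]]]].
    intros a b Ha Hb'. apply filter_In in Ha, Hb'.
    rewrite Hsym. apply Hcl; [tauto|]. destruct (P a); simpl in *; intuition.
  - exists (filter P A), (filter (fun y => negb (P y)) B).
    split; [apply filter_fs; auto|split; [apply filter_fs; auto|split; [try lra|split; [try lra|]]]].
    intros a b Ha Hb'. apply filter_In in Ha, Hb'.
    apply Hcl; [tauto|]. destruct (P b); simpl in *; intuition.
Qed.

Lemma dichotomy {X : Type} (d : X -> X -> R) t (A B : list X) :
  is_ultrametric d -> 0 <= t -> NoDup A -> NoDup B ->
  good A B (/4) (fun a b => d a b <= t) \/ good A B (/4) (fun a b => t < d a b).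
Proof.
  intros [[Hpos [Hz [Hsym Htri]]] Hu] Ht HA HB.
  assert (Hmax : forall x y z, d x y <= t -> d y z <= t -> d x z <= t).
  { intros x y z H1 H2. apply Rle_trans with (Rmax (d x y) (d y z)); [apply Hu | apply Rmax_lub; auto]. }
  destruct A as [|a0 A'] eqn:EA.
  { left. exists [], B. pose proof (pos_INR (length B)).
    repeat split; simpl; auto using NoDup_nil, incl_refl; try (intros; contradiction); lra. }
  rewrite <- EA in *.
  assert (HApos : 0 < INR (length A)) by (subst A; simpl length; rewrite S_INR; pose proof (pos_INR (length A')); lra).
  set (g := fun L => INR (length (filter (fun y => existsb (fun z => nb d t z y) L) A))).
  assert (Hg0 : g [] = 0) by (unfold g; rewrite filter_false; reflexivity).
  assert (HgA : g A = INR (length A)).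
  { unfold g. rewrite filter_all; auto. intros y Hy. apply existsb_exists.
    exists y; split; auto. apply nb_true. replace (d y y) with 0; [lra|]. symmetry; apply Hz; auto. }
  destruct (prefix_lemma g (/4 * INR (length A)) A) as [x [L1 [HL1 HxL1]]]; try lra.
  assert (Hball : INR (length (filter (nb d t x) A)) >= /4 * INR (length A) ->
     good A B (/4) (fun a b => d a b <= t) \/ good A B (/4) (fun a b => t < d a b)).
  { intros HPA.
    destruct (Rge_dec (INR (length (filter (nb d t x) B))) (/4 * INR (length B))) as [Hb|Hb].
    - left. exists (filter (nb d t x) A), (filter (nb d t x) B).
      split; [apply filter_fs; auto|split; [apply filter_fs; auto|split; [try lra|split; [try lra|]]]].
      intros a b Ha Hb'. apply filter_In in Ha, Hb'.
      destruct Ha as [_ Ha]; destruct Hb' as [_ Hb']. apply nb_true in Ha, Hb'.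
      apply Hmax with x; auto. rewrite Hsym; auto.
    - right. pose proof (len_split_R (nb d t x) B) as HL. pose proof (pos_INR (length B)).
      exists (filter (nb d t x) A), (filter (fun y => negb (nb d t x y)) B).
      split; [apply filter_fs; auto|split; [apply filter_fs; auto|split; [try lra|split; [try lra|]]]].
      intros a b Ha Hb'. apply filter_In in Ha, Hb'.
      destruct Ha as [_ Ha]; destruct Hb' as [_ Hb']. apply nb_true in Ha.
      destruct (nb d t x b) eqn:E; try discriminate. apply nb_false in E.
      destruct (Rle_dec (d a b) t) as [h|h]; [|lra].
      exfalso. assert (d x b <= t) by (apply Hmax with a; auto). lra. }
  pose proof (len_or (nb d t x) (fun y => existsb (fun z => nb d t z y) L1) A) as Hor.
  apply le_INR in Hor. rewrite plus_INR in Hor.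
  destruct (Rle_dec (g (x :: L1)) (3/4 * INR (length A))) as [Hle|Hgt].
  - right. set (P := fun y => existsb (fun z => nb d t z y) (x :: L1)).
    apply closed_case with (P := P); auto.
    + intros a b Pa Pb. unfold P in Pa, Pb. apply existsb_exists in Pa.
      destruct Pa as [z [Hzin Hza]]. apply nb_true in Hza.
      destruct (Rle_dec (d a b) t) as [h|h]; [|lra]. exfalso.
      assert (existsb (fun z => nb d t z b) (x :: L1) = true).
      { apply existsb_exists. exists z; split; auto. apply nb_true. apply Hmax with a; auto. }
      congruence.
    + unfold g in HxL1. unfold P. lra.
    + pose proof (len_split_R P A). unfold g in Hle. unfold P in *. lra.
  - apply Hball. unfold g in *. simpl existsb in Hgt. lra.
Qed.

Lemma pq n : 0 <= (/4)^n <= 1.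
Proof. induction n; simpl; nra. Qed.

Lemma induct {X : Type} (d : X -> X -> R) eps :
  is_ultrametric d -> eps > 0 ->
  forall n (A B : list X), NoDup A -> NoDup B ->
  (forall a b, In a A -> In b B -> d a b <= INR n * eps) ->
  exists A0 B0 : list X,
      finsubset A0 A /\ finsubset B0 B /\
      INR (length A0) >= (/4)^n * INR (length A) /\
      INR (length B0) >= (/4)^n * INR (length B) /\
      forall a a' b b', In a A0 -> In a' A0 -> In b B0 -> In b' B0 ->
        Rabs (d a b - d a' b') <= eps.
Proof.
  intros Hu Heps n. pose proof Hu as [[Hpos _] _].
  induction n as [|n IH]; intros A B HA HB Hd.
  - exists A, B. repeat split; auto using incl_refl; simpl; try lra.
    intros a a' b b' Ha Ha' Hb Hb'.
    pose proof (Hd a b Ha Hb); pose proof (Hd a' b' Ha' Hb').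
    pose proof (Hpos a b); pose proof (Hpos a' b'). simpl in *.
    apply Rabs_le; lra.
  - assert (Ht : 0 <= INR n * eps) by (pose proof (pos_INR n); nra).
    rewrite S_INR in Hd.
    destruct (dichotomy d (INR n * eps) A B Hu Ht HA HB) as [G|G];
      destruct G as [A0 [B0 [[HA0 iA0] [[HB0 iB0] [LA [LB Hc]]]]]].
    + destruct (IH A0 B0 HA0 HB0 Hc) as [A1 [B1 [[HA1 iA1] [[HB1 iB1] [LA1 [LB1 Hc1]]]]]].
      exists A1, B1. split; [split; [exact HA1| eapply incl_tran; eauto]|].
      split; [split; [exact HB1| eapply incl_tran; eauto]|].
      split; [|split; [|exact Hc1]].
      * simpl. pose proof (pow_lt (/4) n ltac:(lra)).
        assert ((/4)^n * INR (length A0) >= (/4)^n * (/4 * INR (length A))) by (apply Rmult_ge_compat_l; lra).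
        lra.
      * simpl. pose proof (pow_lt (/4) n ltac:(lra)).
        assert ((/4)^n * INR (length B0) >= (/4)^n * (/4 * INR (length B))) by (apply Rmult_ge_compat_l; lra).
        lra.
    + exists A0, B0. split; [split; auto|]. split; [split; auto|].
      split; [|split].
      * simpl. pose proof (pos_INR (length A)).
        pose proof (pq n). nra.
      * simpl. pose proof (pos_INR (length B)).
        pose proof (pq n). nra.
      * intros a a' b b' Ha Ha' Hb Hb'.
        pose proof (Hc a b Ha Hb); pose proof (Hc a' b' Ha' Hb').
        pose proof (Hd a b (iA0 _ Ha) (iB0 _ Hb)); pose proof (Hd a' b' (iA0 _ Ha') (iB0 _ Hb')).
        apply Rabs_le; lra.
Qed.

Theorem mainTheorem13 (X : Type) (d : X -> X -> R) :
  is_ultrametric d -> bounded_metric d -> strong_EH d.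
Proof.
  intros Hu [M HM] eps Heps.
  destruct (INR_unbounded (M / eps)) as [n Hn].
  exists ((/4)^n). split. apply pow_lt; lra.
  intros A B HA HB. apply (induct d eps Hu Heps n A B HA HB).
  intros a b _ _. pose proof (HM a b).
  assert (M < INR n * eps).
  { apply Rmult_gt_compat_r with (r := eps) in Hn; auto.
    unfold Rdiv in Hn. rewrite Rmult_assoc, Rinv_l in Hn; lra. }
  lra.
Qed.
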